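(* There exist instances of Bin Packing with Usage Cost for which $z_2^*>z_3^*$, where $z_2^*$ and $z_3^*$ are defined as follows. An instance consists of items whose distinct sizes are the positive integers $w'_1,\dots,w'_{n'}$, with $q_d\ge1$ items of size $w'_d$, and $m$ bins, bin $j$ having positive integer capacity $C_j$, fixed cost $f_j\ge 0$ and unit cost $c_j\ge 0$; $C_{\max}=\max_jC_j$. $z_2^*$ (cutting-stock relaxation): for each bin $j$, a pattern is an integer vector $g=(g_1,\dots,g_{n'})$ with $0\le g_d\le q_d$ and $\sum_d g_dw'_d\le C_j$; $I_j$ is the set of all patterns for bin $j$, the $i$-th pattern of bin $j$ being $(g_{1ij},\dots,g_{n'ij})$, with cost $co_{ij}=f_j+c_j\sum_d g_{dij}w'_d$ if nonzero and $co_{ij}=0$ if zero. $z_2^*=\min\sum_{j}\sum_{i\in I_j}co_{ij}p_{ij}$ subject to $\sum_{j}\sum_{i\in I_j}g_{dij}p_{ij}=q_d$ for all $d$, $\sum_{i\in I_j}p_{ij}=1$ for all $j$, $p_{ij}\ge0$. $z_3^*$ (arc-flow relaxation): let $I$ be the set of arcs $(a,a+w'_d)$ with $a\ge0$ integer and $a+w'_d\le C_{\max}$, with variables $x_{ab}\ge0$ for $(a,b)\in I$ and $y_{aj}\in[0,1]$ for each bin $j$ and $a\in\{0,\dots,C_{\max}\}$, with costs $co_{aj}=f_j+a\,c_j$ for $a>0$ and $co_{0j}=0$. $z_3^*=\min\sum_j\sum_{a}co_{aj}y_{aj}$ subject to: $\sum_{(a,b)\in I}x_{ab}-\sum_{(b,c)\in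 I}x_{bc}-\sum_j y_{bj}=0$ for every $b\in\{1,\dots,C_{\max}\}$; $-\sum_{(0,c)\in I}x_{0c}-\sum_j y_{0j}=-m$; $\sum_{a=0}^{C_j}y_{aj}=1$ for every $j$; $\sum_{(a,a+w'_d)\in I}x_{a,a+w'_d}=q_d$ for every $d$; $y_{aj}=0$ for all $j$ and $a\in\{C_j+1,\dots,C_{\max}\}$.
   Context: Bin Packing with Usage Cost: each item must be assigned to exactly one bin, the total size $l_j$ of the items in bin $j$ may not exceed $C_j$, a bin is used if it contains at least one item, a used bin $j$ costs $f_j+c_jl_j$, and the total cost is to be minimised. The two programs above are linear relaxations of exact integer formulations of this problem. *)

(* Defs.v *)
From HB Require Import structures.
From mathcomp Require Import all_boot all_order all_algebra.
Set Implicit Arguments. Unset Strict Implicit. Unset Printing Implicit Defensive.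
Import Order.TTheory GRing.Theory Num.Theory.
Local Open Scope ring_scope.

Section BPUC.
Variables (R : realFieldType) (n m : nat) (w q : 'I_n -> nat) (C : 'I_m -> nat)
          (f c : 'I_m -> R).

(* C_max = max_j C_j ;  Q = max_d q_d (bound used to enumerate patterns) *)
Definition Cmax : nat := \max_(j < m) C j.
Definition Qmax : nat := \max_(d < n) q d.

Definition pat := {ffun 'I_n -> 'I_Qmax.+1}.
Definition load (g : pat) : nat := (\sum_(d < n) (g d : nat) * w d)%N.
Definition is_pattern (j : 'I_m) (g : pat) : bool :=
  [forall d, (g d <= q d)%N] && (load g <= C j)%N.
Definition co2 (j : 'I_m) (g : pat) : R :=
  if [exists d, (g d : nat) != 0%N] then f j + c j * (load g)%:R else 0.

Definition lp2_feasible (p : 'I_m -> pat -> R) : Prop :=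
  [/\ (forall j g, is_pattern j g -> 0 <= p j g),
      (forall d, \sum_(j < m) \sum_(g | is_pattern j g) (g d : nat)%:R * p j g
                  = (q d)%:R) &
      (forall j, \sum_(g | is_pattern j g) p j g = 1)].
Definition lp2_obj (p : 'I_m -> pat -> R) : R :=
  \sum_(j < m) \sum_(g | is_pattern j g) co2 j g * p j g.

Definition node := 'I_Cmax.+1.
(* (a,b) in I  iff  b = a + w'_d for some d (and b <= Cmax, automatic) *)
Definition is_arc (e : node * node) : bool :=
  [exists d, (e.2 : nat) == (e.1 + w d)%N].
Definition co3 (j : 'I_m) (a : node) : R :=
  if (a : nat) == 0%N then 0 else f j + (a : nat)%:R * c j.

Definition lp3_feasible (xy : (node * node -> R) * ('I_m -> node -> R)) : Prop :=
  let x := xy.1 in let y := xy.2 in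
  (forall e, is_arc e -> 0 <= x e) /\
  (forall j a, 0 <= y j a <= 1) /\
  [/\
      (forall b : node, (0 < b)%N ->
         \sum_(e | is_arc e && (e.2 == b)) x e
         - \sum_(e | is_arc e && (e.1 == b)) x e
         - \sum_(j < m) y j b = 0),
      (- \sum_(e | is_arc e && ((e.1 : nat) == 0%N)) x e
         - \sum_(j < m) y j ord0 = - m%:R),
      (forall j, \sum_(a : node | (a <= C j)%N) y j a = 1),
      (forall d, \sum_(e : node * node | (e.2 : nat) == (e.1 + w d)%N) x e = (q d)%:R) &
      (forall j (a : node), (C j < a)%N -> y j a = 0)].
Definition lp3_obj (xy : (node * node -> R) * ('I_m -> node -> R)) : R :=
  \sum_(j < m) \sum_(a : node) co3 j a * xy.2 j a.

End BPUC.

Definition is_min (R : realFieldType) (T : Type) (feas : T -> Prop) (obj : T -> R) (z : R) :=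
  (exists x, feas x /\ obj x = z) /\ (forall x, feas x -> z <= obj x).

(* Main.v *)
Require Import Defs.
From HB Require Import structures.
From mathcomp Require Import all_boot all_order all_algebra.
From mathcomp Require Import ring lra.
Import Order.TTheory GRing.Theory Num.Theory.
Local Open Scope ring_scope.

Lemma inord_val K (HK : K = 2%N) (a : nat) : (a <= 2)%N -> (@inord K a : nat) = a.
Proof. by move=> ha; rewrite inordK // HK ltnS. Qed.

Lemma sum_node (R : realFieldType) K (HK : K = 2%N) (F : 'I_K.+1 -> R) :
  \sum_a F a = F (inord 0) + F (inord 1) + F (inord 2).
Proof.
subst K; rewrite !big_ord_recr big_ord0 /= add0r.
by congr (_ + _ + _); congr F; apply: val_inj; rewrite /= inordK.
Qed.

Lemma sum_pair1 (R : realFieldType) K (HK : K = 2%N) (P : pred ('I_K.+1 * 'I_K.+1))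
  (F : 'I_K.+1 * 'I_K.+1 -> R) a b : (a <= 2)%N -> (b <= 2)%N ->
  (forall e, P e = ((e.1 : nat) == a) && ((e.2 : nat) == b)) ->
  \sum_(e | P e) F e = F (inord a, inord b).
Proof.
move=> ha hb hP; apply: big_pred1 => -[e1 e2].
by rewrite /= hP xpair_eqE -!val_eqE /= !inord_val.
Qed.

Lemma sum_pair2 (R : realFieldType) K (HK : K = 2%N) (P : pred ('I_K.+1 * 'I_K.+1))
  (F : 'I_K.+1 * 'I_K.+1 -> R) :
  (forall e, P e = (((e.1 : nat) == 0%N) && ((e.2 : nat) == 1%N))
                || (((e.1 : nat) == 1%N) && ((e.2 : nat) == 2%N))) ->
  \sum_(e | P e) F e = F (inord 0, inord 1) + F (inord 1, inord 2).
Proof.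
move=> hP; rewrite (bigD1 (inord 0, inord 1)) /=; last by rewrite hP /= !inord_val.
congr (_ + _); apply: sum_pair1 => // -[e1 e2].
rewrite hP xpair_eqE -!val_eqE /= !inord_val //.
by case: (e1 : nat) => [|[|[|i]]]; case: (e2 : nat) => [|[|[|k]]].
Qed.

Lemma arcE n K (w : 'I_n -> nat) (hw : forall d, w d = 1%N) (h0 : 'I_n)
  (e : 'I_K.+1 * 'I_K.+1) :
  [exists d, (e.2 : nat) == (e.1 + w d)%N] = ((e.2 : nat) == (e.1 + 1)%N).
Proof.
apply/existsP/idP => [[d]|h]; first by rewrite hw.
by exists h0; rewrite hw.
Qed.

Arguments inord_val {K}.
Arguments sum_node {R K}.
Arguments sum_pair1 {R K} HK {P F} a b.
Arguments sum_pair2 {R K} HK {P F}.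

Section Inst.
Variable R : realFieldType.
Let w : 'I_1 -> nat := fun _ => 1%N.
Let C : 'I_1 -> nat := fun _ => 2%N.
Let f : 'I_1 -> R := fun _ => 1.
Let c : 'I_1 -> R := fun _ => 0.

Lemma HQ : Qmax w = 1%N. Proof. by rewrite /Qmax big_ord1. Qed.
Lemma HK : Cmax C = 2%N. Proof. by rewrite /Cmax big_ord1. Qed.

Lemma co2E j (g : pat w) : co2 w f c j g = (g ord0 : nat)%:R.
Proof.
rewrite /co2 /f /c mul0r addr0.
have hg : (g ord0 < 2)%N by apply: leq_trans (ltn_ord _) _; rewrite HQ.
have -> : [exists d, (g d : nat) != 0%N] = ((g ord0 : nat) != 0%N).
  by apply/existsP/idP => [[d]|h]; [rewrite (ord1 d)|exists ord0].
by move: hg; case: (g ord0 : nat) => [|[|]].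
Qed.

Lemma lp2_part : is_min (@lp2_feasible R 1 1 w w C) (@lp2_obj R 1 1 w w C f c) 1.
Proof.
set g1 : pat w := [ffun _ => inord 1].
have g1v d : (g1 d : nat) = 1%N by rewrite ffunE inordK // HQ.
have pg1 j : is_pattern w C j g1.
  apply/andP; split; first by apply/forallP => d; rewrite g1v.
  by rewrite /load big_ord1 g1v.
split.
  exists (fun _ g => if g == g1 then 1 else 0); split.
    split.
    - by move=> j g _; case: ifP.
    - move=> d; rewrite big_ord1 (bigD1 g1) //= eqxx g1v mulr1 big1 ?addr0 //.
      by move=> g /andP[_ /negbTE ->]; rewrite mulr0.
    - move=> j; rewrite (bigD1 g1) //= eqxx big1 ?addr0 //.
      by move=> g /andP[_ /negbTE ->].
  rewrite /lp2_obj big_ord1 (bigD1 g1) //= eqxx co2E g1v mulr1 big1 ?addr0 //.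
  by move=> g /andP[_ /negbTE ->]; rewrite mulr0.
move=> p [_ hq _]; rewrite /lp2_obj; move: (hq ord0).
rewrite !big_ord1 => H; rewrite -[leLHS]/((w ord0)%:R) -H.
by rewrite le_eqVlt; apply/orP; left; apply/eqP/eq_bigr => g _; rewrite co2E.
Qed.

Ltac pcaseh hb := let e1 := fresh in let e2 := fresh in
  move=> [e1 e2]; rewrite /is_arc ?(@arcE _ _ w (fun _ => erefl) ord0) /= -?val_eqE /= ?hb;
  have := leq_trans (ltn_ord e1) (eq_leq (congr1 S HK));
  have := leq_trans (ltn_ord e2) (eq_leq (congr1 S HK));
  case: (e2 : nat) => [|[|[|?]]]; case: (e1 : nat) => [|[|[|?]]]; done.
Ltac pcase := pcaseh erefl.

Lemma node_cases (b : node C) : (0 < b)%N -> (b : nat) = 1%N \/ (b : nat) = 2%N.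
Proof.
have := ltn_ord b; rewrite {2}HK.
by case: (b : nat) => [|[|[|]]] //; auto.
Qed.

Lemma lp3_part : is_min (@lp3_feasible R 1 1 w w C) (@lp3_obj R 1 C f c) (1/2).
Proof.
have nv := inord_val HK.
split.
  exists ((fun e : node C * node C => if (((e.1 : nat) == 0%N) && ((e.2 : nat) == 1%N))
                || (((e.1 : nat) == 1%N) && ((e.2 : nat) == 2%N)) then 1/2 else 0),
          (fun (j : 'I_1) (a : node C) => if ((a : nat) == 0%N) || ((a : nat) == 2%N) then 1/2 else 0)).
  split.
    rewrite /lp3_feasible /=; split.
      by move=> e _; case: ifP => _ //; lra.
    split.
      by move=> j a; case: ifP => _; apply/andP; split; lra.
    split.
    - move=> b hb0; rewrite big_ord1.
      case: (node_cases _ hb0) => hb.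
      + rewrite (sum_pair1 HK 0 1) //; last by pcaseh hb.
        rewrite (sum_pair1 HK 1 2) //; last by pcaseh hb.
        by rewrite /= !nv // hb /=; lra.
      + rewrite (sum_pair1 HK 1 2) //; last by pcaseh hb.
        rewrite big_pred0; last by pcaseh hb.
        by rewrite /= !nv // hb /=; lra.
    - rewrite big_ord1 (sum_pair1 HK 0 1) //; last by pcase.
      by rewrite /= !nv //=; lra.
    - move=> j; rewrite (eq_bigl xpredT); last first.
        by move=> a; have := ltn_ord a; rewrite /C {2}HK.
      by rewrite (sum_node HK) /= !nv //=; lra.
    - move=> d; rewrite (sum_pair2 HK); last by pcase.
      by rewrite /= !nv //= /w; lra.
    - by move=> j a; have := ltn_ord a; rewrite /C {2}HK => h1 h2; rewrite ltnS leqNgt h2 in h1.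
  rewrite /lp3_obj big_ord1 (sum_node HK) /co3 /f /c /= !nv //=; lra.
move=> [x y] /= [_ [hy [hf _ _ ha _]]].
have N1 := hf (inord 1) ltac:(by rewrite nv).
have N2 := hf (inord 2) ltac:(by rewrite nv).
have A := ha ord0.
have /andP[Y1 _] := hy ord0 (inord 1).
rewrite (sum_pair1 HK 0 1) // in N1; last by pcaseh (nv 1%N isT).
rewrite (sum_pair1 HK 1 2) // in N1; last by pcaseh (nv 1%N isT).
rewrite (sum_pair1 HK 1 2) // in N2; last by pcaseh (nv 2%N isT).
rewrite big_pred0 in N2; last by pcaseh (nv 2%N isT).
rewrite (sum_pair2 HK) in A; last by pcase.
rewrite !big_ord1 in N1 N2.
rewrite /lp3_obj big_ord1 (sum_node HK) /co3 /f /c /= !nv //=.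
move: A N1 N2 Y1; rewrite /w /= => A N1 N2 Y1; lra.
Qed.
End Inst.

Theorem proposition4 (R : realFieldType) :
  exists (n m : nat) (w q : 'I_n -> nat) (C : 'I_m -> nat) (f c : 'I_m -> R) (z2 z3 : R),
    [/\ (forall d, (0 < w d)%N), injective w & (forall d, (1 <= q d)%N)] /\
    [/\ (forall j, (0 < C j)%N), (forall j, 0 <= f j) & (forall j, 0 <= c j)] /\
    [/\ is_min (@lp2_feasible R n m w q C) (@lp2_obj R n m w q C f c) z2,
        is_min (@lp3_feasible R n m w q C) (@lp3_obj R m C f c) z3 &
        z3 < z2].
Proof.
exists 1%N, 1%N, (fun _ => 1%N), (fun _ => 1%N), (fun _ => 2%N), (fun _ => 1), (fun _ => 0), 1, (1/2).
split; first by split => // d1 d2 _; rewrite (ord1 d1) (ord1 d2).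
split; first by split => // j; rewrite ?ler01.
split; [exact: lp2_part | exact: lp3_part | lra].
Qed.
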